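(* Let $m>3$ and $t\ge 0$ be integers, and let $n=2(mt+1)$. Then the set $[n]=\{1,\dots,n\}$ admits no $m$-good partition.
   Context: For integers $n>0$ and $m>1$, a partition of $[n]=\{1,\dots,n\}$ into nonempty parts is called $m$-good if every part has at most $m$ elements and the sum of the elements of every part is a power of $m$, i.e. equals $m^s$ for some integer $s\ge 0$ (so $m^0=1$ is allowed). *)

(* Defs.v *)
From mathcomp Require Import all_boot.
Set Implicit Arguments. Unset Strict Implicit. Unset Printing Implicit Defensive.

(* [n] = {1,...,n} is encoded as 'I_n, where i : 'I_n represents the integer i+1. *)
Definition elt (n : nat) (i : 'I_n) : nat := i.+1.

Definition block_sum (n : nat) (B : {set 'I_n}) : nat := \sum_(i in B) elt i.

Definition is_power_of (m k : nat) : Prop := exists s : nat, k = m ^ s.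

Definition m_good (m n : nat) (P : {set {set 'I_n}}) : Prop :=
  partition P [set: 'I_n] /\
  forall B, B \in P -> #|B| <= m /\ is_power_of m (block_sum B).

(* Main.v *)
Require Import Defs.
From mathcomp Require Import all_boot.
From mathcomp Require Import zify.

Lemma tri N : \sum_(i < 2 * N) i.+1 = N * (2 * N + 1).
Proof.
elim: N => [|N IH]; first by rewrite big_ord0.
have -> : 2 * N.+1 = (2 * N).+2 by rewrite mulnS.
rewrite !big_ord_recr /= IH.
nia.
Qed.

Lemma key k m (P : {set {set 'I_k.+1}}) : 1 < m -> partition P [set: 'I_k.+1] ->
  (forall B, B \in P -> is_power_of m (block_sum B)) ->
  (\sum_(i < k.+1) elt i) %% m <= 1.
Proof.
move=> m1 /and3P [/eqP cov triv nz] Hp.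
have E : \sum_(i < k.+1) elt i = \sum_(B in P) block_sum B.
  rewrite /block_sum -(big_trivIset _ triv) cov.
  by apply: eq_bigl => i; rewrite inE.
have E1 : \sum_(B in P) \sum_(i in B) (i == ord0 :> 'I_k.+1) = 1.
  rewrite -(big_trivIset _ triv) cov.
  rewrite (bigD1 ord0) ?inE //= big1 // => i /andP [_ /negbTE ->].
  by [].
rewrite E -modn_summ.
have L : \sum_(B in P) block_sum B %% m <= 1.
  rewrite -[X in _ <= X]E1; apply: leq_sum => B BP.
  have [s Hs] := Hp B BP; rewrite Hs.
  case: (boolP (ord0 \in B)) => H0.
    rewrite (bigD1 ord0) //=; apply: (leq_trans _ (leq_addr _ _)).
    case: s Hs => [|s] _; first by rewrite expn0 modn_small.
    by rewrite expnS modnMr.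
  case: s Hs => [|s] Hs; last by rewrite expnS modnMr.
  exfalso.
  have : B != set0 by apply: contraNneq nz => <-.
  case/set0Pn => j jB.
  have jn : j != ord0 by apply: contraNneq H0 => <-.
  move: Hs; rewrite expn0 /block_sum (bigD1 j) //= /elt.
  have : 0 < j by rewrite lt0n.
  case: (nat_of_ord j) => // j' _; by rewrite addSn.
by rewrite modn_small // (leq_ltn_trans L).
Qed.

Theorem mainTheorem1 (m t : nat) (hm : 3 < m) :
  ~ exists P : {set {set 'I_(2 * (m * t + 1))}}, m_good m P.
Proof.
case=> P [Hpart HB].
have e : 2 * (m * t + 1) = (2 * m * t + 1).+1 by lia.
move: P Hpart HB.
have H := @key (2 * m * t + 1) m.
rewrite e => P Hpart HB.
have := H P (ltn_trans _ hm) Hpart (fun B BP => (HB B BP).2).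
have -> : \sum_(i < (2 * m * t + 1).+1) elt i = \sum_(i < 2 * (m * t + 1)) i.+1.
  by rewrite -e.
rewrite tri.
have -> : (m * t + 1) * (2 * (m * t + 1) + 1) = (2 * m * t * t + 5 * t) * m + 3.
  nia.
rewrite modnMDl modn_small //; by move/(_ isT).
Qed.
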